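(* Let $E$ be a nonempty bounded subset of $M_a$ and $p\in E$. If $i\in\Lambda(E)$, then $p+\alpha e_i\in\mathrm{GS}(E,p)$ for all $\alpha\in\mathbb R$.
   Context: Let $a=\{a_i\}$ be a sequence of positive reals with $\sum_i a_i^2<\infty$, $M_a=\{x\in\mathbb{R}^{\mathbb N}:\sum_i a_i^2x_i^2<\infty\}$ with inner product $\langle x,y\rangle_a=\sum_i a_i^2x_iy_i$ and norm $\|x\|_a=\sqrt{\langle x,x\rangle_a}$ (a Hilbert space). $e_i$ denotes the sequence with $1$ in position $i$ and $0$ elsewhere. For nonempty $E\subset M_a$, $\Lambda(E)$ is the set of $i\in\mathbb N$ for which there exist $x\in E$ and $\alpha\in\mathbb R\setminus\{0\}$ with $x+\alpha e_i\in E$. The generalized linear span of $E$ with respect to $p\in E$ is $\mathrm{GS}(E,p)=\{p+\sum_i\alpha_i(x_i-p)\in M_a: x_i\in E,\ \alpha_i\in\mathbb R\}$, where the index $i$ runs over a finite or countably infinite subset of $\mathbb N$ and infinite sums are limits in $\|\cdot\|_a$ of their partial sums. *)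

(* Defs.v *)
From Stdlib Require Import Reals Arith.
From Coquelicot Require Import Coquelicot.
Open Scope R_scope.

Definition seqR := nat -> R.

Definition admissible_weight (a : seqR) : Prop :=
  (forall i, 0 < a i) /\ ex_series (fun i => (a i) ^ 2).

Definition in_Ma (a : seqR) (x : seqR) : Prop :=
  ex_series (fun i => (a i) ^ 2 * (x i) ^ 2).

Definition inner_a (a : seqR) (x y : seqR) : R :=
  Series (fun i => (a i) ^ 2 * x i * y i).

Definition norm_a (a : seqR) (x : seqR) : R := sqrt (inner_a a x x).

Definition vadd (x y : seqR) : seqR := fun i => x i + y i.
Definition vsub (x y : seqR) : seqR := fun i => x i - y i.
Definition vscal (c : R) (x : seqR) : seqR := fun i => c * x i.

Definition unit_vec (i : nat) : seqR := fun j => if Nat.eqb j i then 1 else 0.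

Definition bounded_a (a : seqR) (E : seqR -> Prop) : Prop :=
  exists C : R, forall x, E x -> norm_a a x <= C.

Definition Lambda (E : seqR -> Prop) (i : nat) : Prop :=
  exists (x : seqR) (alpha : R),
    E x /\ alpha <> 0 /\ E (vadd x (vscal alpha (unit_vec i))).

Fixpoint partial_comb (p : seqR) (xs : nat -> seqR) (al : nat -> R) (n : nat)
  : seqR :=
  match n with
  | O => p
  | S m => vadd (partial_comb p xs al m) (vscal (al m) (vsub (xs m) p))
  end.

(* Generalized linear span GS(E,p): elements y of M_a of the form
   p + sum_k alpha_k (x_k - p) with x_k in E, where the sum is either finite
   or countably infinite; an infinite sum is the ||.||_a-limit of its partial
   sums. (Indexing a finite / countably infinite subset of N in increasing
   order by 0,1,2,... .) *)
Definition GS (a : seqR) (E : seqR -> Prop) (p : seqR) (y : seqR) : Prop :=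
  in_Ma a y /\
  ((exists (n : nat) (xs : nat -> seqR) (al : nat -> R),
      (forall k, (k < n)%nat -> E (xs k)) /\ y = partial_comb p xs al n)
   \/
   (exists (xs : nat -> seqR) (al : nat -> R),
      (forall k, E (xs k)) /\
      is_lim_seq (fun n => norm_a a (vsub (partial_comb p xs al n) y)) 0)).

(* Main.v *)
Require Import Defs.
From Stdlib Require Import Reals Lra FunctionalExtensionality.
From Coquelicot Require Import Coquelicot.
Open Scope R_scope.

Theorem lemma3p3 (a : seqR) (E : seqR -> Prop) (p : seqR) (i : nat) :
  admissible_weight a ->
  (forall x, E x -> in_Ma a x) ->
  (exists x, E x) ->
  bounded_a a E ->
  E p ->
  Lambda E i ->
  forall alpha : R, GS a E p (vadd p (vscal alpha (unit_vec i))).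
Proof.
  intros [Ha Hs] HM _ _ Hp [x [beta [Hx [Hb Hx2]]]] alpha.
  split.
  - unfold in_Ma.
    apply (@ex_series_le R_AbsRing R_CompleteNormedModule _ (fun j => 2 * (a j ^ 2 * p j ^ 2) + 2 * alpha ^ 2 * a j ^ 2)).
    + intros j. rewrite Rabs_pos_eq.
      * unfold vadd, vscal, unit_vec. destruct (Nat.eqb j i).
        -- assert (0 <= a j ^ 2 * (p j - alpha) ^ 2) by (apply Rmult_le_pos; apply pow2_ge_0).
           nra.
        -- assert (0 <= a j ^ 2 * alpha ^ 2) by (apply Rmult_le_pos; apply pow2_ge_0).
           nra.
      * apply Rmult_le_pos; apply pow2_ge_0.
    + apply (ex_series_plus (fun j => 2 * (a j ^ 2 * p j ^ 2)) (fun j => 2 * alpha ^ 2 * a j ^ 2)).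
      * apply (ex_series_scal_l 2 (fun j => a j ^ 2 * p j ^ 2)). apply HM; exact Hp.
      * apply (ex_series_scal_l (2 * alpha ^ 2) (fun j => a j ^ 2)). exact Hs.
  - left. exists 2%nat.
    exists (fun k => match k with O => vadd x (vscal beta (unit_vec i)) | _ => x end).
    exists (fun k => match k with O => alpha / beta | _ => - (alpha / beta) end).
    split.
    + intros k _. destruct k; assumption.
    + apply functional_extensionality; intro j.
      simpl. unfold vadd, vscal, vsub. field. exact Hb.
Qed.
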